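(* Let $\Bbbk$ be a field. If $G$ is a graph with no induced $2K_2$ that is prime over $\Bbbk$, then $\operatorname{reg}_{\Bbbk}(G)\le\frac{\delta(G)+3}{2}$, where $\delta(G)$ is the minimum degree.
   Context: $2K_2$ is the disjoint union of two edges. $\operatorname{reg}_{\Bbbk}(G)=\max\{j\ge0:\widetilde H_{j-1}(\operatorname{Ind}(G[S]);\Bbbk)\neq0\text{ for some }S\subseteq V(G)\}$, $\operatorname{Ind}$ the independence complex. A connected graph $G$ is prime over $\Bbbk$ if $\operatorname{reg}_{\Bbbk}(G-x)<\operatorname{reg}_{\Bbbk}(G)$ for every vertex $x$. *)

(* Defs.v *)
(* Finite simple graphs on vertex set 'I_n, given by an
   adjacency relation e (assumed symmetric and irreflexive in the theorem). *)
From HB Require Import structures.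
From mathcomp Require Import all_boot all_order all_algebra.
Set Implicit Arguments. Unset Strict Implicit. Unset Printing Implicit Defensive.
Import GRing.Theory.

Definition indep (n : nat) (e : rel 'I_n) (F : {set 'I_n}) : bool :=
  [forall u in F, forall v in F, ~~ e u v].

(* (j-1)-dimensional faces (= faces with j vertices) of Ind(G[S]) *)
Definition faces (n : nat) (e : rel 'I_n) (S : {set 'I_n}) (j : nat)
  : {set {set 'I_n}} :=
  [set F : {set 'I_n} | [&& F \subset S, indep e F & #|F| == j]].

(* Simplicial boundary map C_{j-1} -> C_{j-2} of the augmented chain complex
   of Ind(G[S]) over K, as a matrix acting on row vectors (rows indexed by
   faces with j vertices, columns by faces with j-1 vertices).  For j = 0 this is the zero map
   from C_{-1} = K (the empty face) to 0. *)
Definition bdry (K : fieldType) (n : nat) (e : rel 'I_n) (S : {set 'I_n})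
  (j : nat) : 'M[K]_(#|faces e S j|, #|faces e S j.-1|) :=
  \matrix_(a < #|faces e S j|, b < #|faces e S j.-1|)
    (let F : {set 'I_n} := enum_val a in let F' : {set 'I_n} := enum_val b in
     if F' \subset F then
       (\sum_(v in F :\: F') (-1) ^+ #|[set u in F | (u < v)%N]|)%R
     else 0%R).

(* reduced homology  H~_{j-1}(Ind(G[S]); K) = ker d_j / im d_{j+1}  is nonzero *)
Definition red_homology_nonzero (K : fieldType) (n : nat) (e : rel 'I_n)
  (S : {set 'I_n}) (j : nat) : bool :=
  ~~ (kermx (bdry K e S j) <= bdry K e S j.+1)%MS.

(* regularity of the induced subgraph G[W]:
   max { j : H~_{j-1}(Ind(G[S]);K) <> 0 for some S subset of W }.
   (No j > n can occur since then there are no faces with j vertices.) *)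
Definition reg_on (K : fieldType) (n : nat) (e : rel 'I_n) (W : {set 'I_n})
  : nat :=
  \max_(j < n.+2 | [exists S : {set 'I_n},
                      (S \subset W) && red_homology_nonzero K e S j]) j.

Definition reg (K : fieldType) (n : nat) (e : rel 'I_n) : nat :=
  reg_on K e [set: 'I_n].

Definition connected_graph (n : nat) (e : rel 'I_n) : Prop :=
  forall x y : 'I_n, connect e x y.

Definition prime_graph (K : fieldType) (n : nat) (e : rel 'I_n) : Prop :=
  connected_graph e /\ forall x : 'I_n, (reg_on K e [set~ x] < reg K e)%N.

Definition twoK2_free (n : nat) (e : rel 'I_n) : Prop :=
  forall a b c d : 'I_n, e a b -> e c d ->
    [|| e a c, e a d, e b c | e b d].

Definition degree (n : nat) (e : rel 'I_n) (v : 'I_n) : nat :=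
  #|[set u | e v u]|.

(* minimum degree (for n = 0 this is n = 0) *)
Definition min_degree (n : nat) (e : rel 'I_n) : nat :=
  \big[minn/n]_(v : 'I_n) degree e v.

(* Main.v *)
Require Import Defs.
From HB Require Import structures.
From mathcomp Require Import all_boot all_order all_algebra.
From mathcomp Require Import ring zify.
Set Implicit Arguments. Unset Strict Implicit. Unset Printing Implicit Defensive.
Import GRing.Theory.
Local Open Scope ring_scope.
Definition eps (K : fieldType) (n : nat) (F : {set 'I_n}) (v : 'I_n) : K :=
  (-1) ^+ #|[set u in F | (u < v)%N]|.
Lemma eps_add (K : fieldType) n (G : {set 'I_n}) v a : v \notin G ->
  eps K (v |: G) a = (-1) ^+ (v < a)%N * eps K G a.
Proof.
move=> vG; rewrite /eps -exprD; congr (_ ^+ _).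
case: (ltnP v a) => va.
  have -> : [set u in v |: G | (u < a)%N] = v |: [set u in G | (u < a)%N].
    by apply/setP => u; rewrite !inE; case: (eqVneq u v) => [->|]; rewrite ?va ?orbT.
  by rewrite cardsU1 inE (negbTE vG).
rewrite /nat_of_bool add0n; apply: eq_card => u; rewrite !inE; case: (eqVneq u v) => [->|] //=.
by rewrite ltnNge va andbF.
Qed.

Definition dd (K : fieldType) (n : nat) (c : {set 'I_n} -> K) (F : {set 'I_n}) : K :=
  \sum_(v | v \notin F) c (v |: F) * eps K (v |: F) v.

Definition JJ (K : fieldType) (n : nat) (a : 'I_n) (u : {set 'I_n} -> K) (F : {set 'I_n}) : K :=
  if a \in F then eps K F a * u (F :\ a) else 0.

Lemma eps_sq (K : fieldType) n (F : {set 'I_n}) v : eps K F v * eps K F v = 1.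
Proof. by rewrite /eps -exprD addnn -mul2n exprM sqrrN !expr1n. Qed.

Lemma eq_dd (K : fieldType) n (c c' : {set 'I_n} -> K) :
  (forall F, c F = c' F) -> forall G, dd c G = dd c' G.
Proof. by move=> h G; apply: eq_bigr => v _; rewrite h. Qed.

Lemma dd_add (K : fieldType) n (c c' : {set 'I_n} -> K) G :
  dd (fun F => c F + c' F) G = dd c G + dd c' G.
Proof. by rewrite /dd -big_split /=; apply: eq_bigr => v _; rewrite mulrDl. Qed.

Lemma dd_sub (K : fieldType) n (c c' : {set 'I_n} -> K) G :
  dd (fun F => c F - c' F) G = dd c G - dd c' G.
Proof. by rewrite /dd -sumrB /=; apply: eq_bigr => v _; rewrite mulrBl. Qed.

Lemma dJ (K : fieldType) n (a : 'I_n) (u : {set 'I_n} -> K) :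
  (forall F : {set 'I_n}, a \in F -> u F = 0) ->
  forall G, dd (JJ a u) G = u G - JJ a (dd u) G.
Proof.
move=> u0 G; rewrite /JJ; case: ifP => aG.
  rewrite u0 // sub0r /dd.
  rewrite [X in _ = - (_ * X)](bigD1 a) /=; last by rewrite !inE eqxx.
  rewrite setD1K // u0 // mul0r add0r mulr_sumr -sumrN.
  have -> : \sum_(i < n | (i \notin G :\ a) && (i != a))
       - (eps K G a * (u (i |: G :\ a) * eps K (i |: G :\ a) i)) =
       \sum_(i < n | i \notin G)
       - (eps K G a * (u (i |: G :\ a) * eps K (i |: G :\ a) i)).
    apply: eq_bigl => v; rewrite !inE; case: (eqVneq v a) => [->|] /=; by rewrite ?aG ?andbT.
  apply: eq_bigr => v vG.
  have va : v != a by apply: contraNneq vG => ->.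
  rewrite !inE aG orbT.
  have -> : (v |: G) :\ a = v |: (G :\ a).
    by apply/setP => x; rewrite !inE; case: (eqVneq x a) => [->|] /=; rewrite ?orbF 1?eq_sym ?(negbTE va).
  have vG' : v \notin G :\ a by rewrite !inE negb_and vG orbT.
  rewrite (eps_add _ _ vG) (eps_add _ _ vG) (eps_add _ _ vG').
  have eG : eps K G v = (-1) ^+ (a < v)%N * eps K (G :\ a) v.
    by rewrite -{1}(setD1K aG) eps_add // !inE eqxx.
  rewrite eG ltnn expr0 !mul1r.
  have : ((v < a)%N + (a < v)%N = 1)%N.
    by case: (ltngtP v a) => // /val_inj h; move: va; rewrite h eqxx.
  by case: (v < a)%N; case: (a < v)%N => //= _; rewrite ?expr0 ?expr1; ring.
rewrite subr0 /dd (bigD1 a) /=; last by rewrite aG.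
rewrite big1 ?addr0.
  by rewrite !inE eqxx /= setU1K ?aG // mulrAC eps_sq mul1r.
move=> v /andP [vG va]; rewrite !inE eq_sym (negbTE va) aG /=; by rewrite mul0r.
Qed.

Definition supp (K : fieldType) n (A : {set {set 'I_n}}) (c : {set 'I_n} -> K) :=
  forall F, F \notin A -> c F = 0.

Definition HV (K : fieldType) n (e : rel 'I_n) (S : {set 'I_n}) (j : nat) :=
  forall c : {set 'I_n} -> K, supp (faces e S j) c -> (forall F, dd c F = 0) ->
  exists b : {set 'I_n} -> K, supp (faces e S j.+1) b /\ forall F, dd b F = c F.

Lemma facesE n (e : rel 'I_n) (S : {set 'I_n}) j (F : {set 'I_n}) :
  (F \in faces e S j) = [&& F \subset S, indep e F & #|F| == j].
Proof. by rewrite inE. Qed.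

Lemma indepP n (e : rel 'I_n) (F : {set 'I_n}) :
  reflect (forall u v, u \in F -> v \in F -> ~~ e u v) (indep e F).
Proof.
apply: (iffP idP) => [/forall_inP h u v uF vF| h].
  by have /forall_inP := h u uF; apply.
by apply/forall_inP => u uF; apply/forall_inP => v vF; apply: h.
Qed.

Lemma indep_sub n (e : rel 'I_n) (F F' : {set 'I_n}) : F \subset F' -> indep e F' -> indep e F.
Proof.
move=> /subsetP sFF' /indepP h; apply/indepP => u v uF vF; apply: h; exact: sFF'.
Qed.

Lemma indep_add n (e : rel 'I_n) (e_sym : symmetric e) (e_irr : irreflexive e) a (F : {set 'I_n}) :
  indep e F -> (forall x, x \in F -> ~~ e a x) -> indep e (a |: F).
Proof.
move=> /indepP h ha; apply/indepP => u v; rewrite !inE.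
case/orP => [/eqP->|uF]; case/orP => [/eqP->|vF].
- by rewrite e_irr.
- exact: ha.
- by rewrite e_sym; apply: ha.
- exact: h.
Qed.

Lemma faces_sub n (e : rel 'I_n) (S S' : {set 'I_n}) j (F : {set 'I_n}) : S \subset S' ->
  F \in faces e S j -> F \in faces e S' j.
Proof.
move=> sSS'; rewrite !facesE => /and3P [sFS -> ->]; by rewrite (subset_trans sFS sSS').
Qed.

Definition cc1 (K : fieldType) n (a : 'I_n) (c : {set 'I_n} -> K) (F : {set 'I_n}) :=
  if a \in F then 0 else c F.
Definition ww (K : fieldType) n (a : 'I_n) (c : {set 'I_n} -> K) (F : {set 'I_n}) :=
  if a \in F then 0 else eps K (a |: F) a * c (a |: F).

Lemma decomp (K : fieldType) n (a : 'I_n) (c : {set 'I_n} -> K) (F : {set 'I_n}) :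
  c F = cc1 a c F + JJ a (ww a c) F.
Proof.
rewrite /cc1 /JJ /ww; case: ifP => aF.
  by rewrite add0r !inE eqxx /= setD1K // mulrA eps_sq mul1r.
by rewrite addr0.
Qed.

Lemma dd_zero_at (K : fieldType) n (a : 'I_n) (c : {set 'I_n} -> K) (G : {set 'I_n}) :
  (forall F : {set 'I_n}, a \in F -> c F = 0) -> a \in G -> dd c G = 0.
Proof.
move=> h aG; rewrite /dd big1 // => v _; rewrite h ?mul0r //.
by rewrite !inE aG orbT.
Qed.

Lemma decomp_dd (K : fieldType) n (a : 'I_n) (c : {set 'I_n} -> K) :
  (forall F, dd c F = 0) ->
  forall G, dd (cc1 a c) G + ww a c G - JJ a (dd (ww a c)) G = 0.
Proof.
move=> h G; rewrite -(h G) (eq_dd (decomp a c)) dd_add dJ; first by rewrite addrA.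
by move=> F aF; rewrite /ww aF.
Qed.

Lemma dd_ww0 (K : fieldType) n (a : 'I_n) (c : {set 'I_n} -> K) :
  (forall F, dd c F = 0) -> forall G, dd (ww a c) G = 0.
Proof.
move=> h G; case: (boolP (a \in G)) => aG.
  by apply: (dd_zero_at _ aG) => F aF; rewrite /ww aF.
have := decomp_dd a h (a |: G).
have z : dd (cc1 a c) (a |: G) = 0.
  by apply: (dd_zero_at (a:=a)); [move=> F aF; rewrite /cc1 aF | rewrite !inE eqxx].
rewrite z add0r /ww /JJ !inE eqxx /= setU1K // sub0r => /eqP; rewrite oppr_eq0 mulf_eq0.
case/orP => /eqP // h0; have := eps_sq K (a |: G) a; rewrite h0 mul0r => /eqP.
by rewrite eq_sym oner_eq0.
Qed.

Definition NB n (e : rel 'I_n) (a : 'I_n) : {set 'I_n} := [set v | e a v].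

Lemma faces_add n (e : rel 'I_n) (e_sym : symmetric e) (e_irr : irreflexive e)
  (S S' F : {set 'I_n}) a k :
  a \in S -> S' \subset S -> F \in faces e S' k -> a \notin F ->
  (forall x, x \in F -> ~~ e a x) -> a |: F \in faces e S k.+1.
Proof.
move=> aS sS' + aF ha; rewrite !facesE => /and3P [sF ind /eqP <-].
rewrite cardsU1 aF add1n eqxx andbT indep_add // andbT.
by rewrite subUset sub1set aS (subset_trans sF sS').
Qed.

Lemma faces_rem n (e : rel 'I_n) (S F : {set 'I_n}) a k :
  a \notin F -> a |: F \in faces e S k.+1 ->
  F \in faces e (S :\: (a |: NB e a)) k.
Proof.
move=> aF; rewrite !facesE => /and3P [sF ind /eqP hc].
rewrite (indep_sub (subsetUr _ _) ind) /=.
move: hc; rewrite cardsU1 aF add1n => -[->]; rewrite eqxx andbT.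
apply/subsetP => x xF; rewrite !inE.
have xS : x \in S by apply: (subsetP sF); rewrite !inE xF orbT.
rewrite xS andbT negb_or; apply/andP; split.
  by apply: contraNneq aF => <-.
by move/indepP: ind; apply; rewrite !inE ?eqxx ?xF ?orbT.
Qed.

Lemma core (K : fieldType) n (e : rel 'I_n) (e_sym : symmetric e) (e_irr : irreflexive e)
  (S : {set 'I_n}) a j :
  a \in S -> HV K e (S :\ a) j.+1 -> HV K e (S :\: (a |: NB e a)) j -> HV K e S j.+1.
Proof.
move=> aS H1 H2 c sc dc0.
have sw : supp (faces e (S :\: (a |: NB e a)) j) (ww a c).
  move=> F Fn; rewrite /ww; case: ifP => aF //.
  rewrite (sc (a |: F)) ?mulr0 //; apply: contra Fn.
  by apply: faces_rem; rewrite aF.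
have [u [su du]] := H2 (ww a c) sw (dd_ww0 a dc0).
have sub1 : S :\: (a |: NB e a) \subset S :\ a.
  by apply: setDS; rewrite sub1set !inE eqxx.
have u0 : forall F : {set 'I_n}, a \in F -> u F = 0.
  move=> F aF; apply: su; rewrite facesE negb_and; apply/orP; left.
  apply/negP => /subsetP /(_ a aF); by rewrite !inE eqxx.
pose c' := fun F => cc1 a c F + u F.
have sc' : supp (faces e (S :\ a) j.+1) c'.
  move=> F Fn; rewrite /c' /cc1.
  have -> : u F = 0 by apply: su; apply: contra Fn; apply: faces_sub.
  case: ifP => aF; rewrite addr0 // sc //; apply: contra Fn.
  rewrite !facesE => /and3P [sF -> ->]; by rewrite subsetD1 sF aF.
have dc' : forall F, dd c' F = 0.
  move=> F; rewrite /c' dd_add du.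
  have := decomp_dd a dc0 F.
  have -> : JJ a (dd (ww a c)) F = 0 by rewrite /JJ dd_ww0 // mulr0 if_same.
  by rewrite subr0.
have [v [sv dv]] := H1 c' sc' dc'.
exists (fun F => v F - JJ a u F); split.
  move=> F Fn; rewrite sv ?sub0r; last first.
    by apply: contra Fn; apply: faces_sub; apply: subD1set.
  rewrite /JJ; case: ifP => aF; last by rewrite oppr0.
  rewrite su ?mulr0 ?oppr0 //; apply: contra Fn => Fin.
  rewrite -(setD1K aF); apply: (faces_add e_sym e_irr aS _ Fin).
  - exact: subsetDl.
  - by rewrite !inE eqxx.
  - move=> x; move: Fin; rewrite facesE => /and3P [/subsetP sF _ _] /sF.
    by rewrite !inE negb_or => /andP [/andP [_ ->]].
move=> G; rewrite dd_sub dJ // dv /c'.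
rewrite (decomp a c G); rewrite /JJ; case: ifP => aG.
  by rewrite du; ring.
by ring.
Qed.

Lemma cone (K : fieldType) n (e : rel 'I_n) (e_sym : symmetric e) (e_irr : irreflexive e)
  (S : {set 'I_n}) a j :
  a \in S -> (forall x, x \in S -> ~~ e a x) -> HV K e S j.
Proof.
move=> aS ha c sc dc0; exists (JJ a (cc1 a c)); split.
  move=> F Fn; rewrite /JJ; case: ifP => aF //.
  rewrite /cc1 !inE eqxx /= (sc (F :\ a)) ?mulr0 //; apply: contra Fn => Fin.
  rewrite -(setD1K aF); apply: (faces_add e_sym e_irr aS (subxx S) Fin).
  - by rewrite !inE eqxx.
  - move=> x; move: Fin; rewrite facesE => /and3P [/subsetP sF _ _] /sF; exact: ha.
move=> G; rewrite dJ; last by move=> F aF; rewrite /cc1 aF.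
rewrite (decomp a c G) /JJ; case: ifP => aG; last by rewrite subr0 addr0.
have := decomp_dd a dc0 (G :\ a).
rewrite /JJ !inE eqxx /= subr0 => /eqP; rewrite addr_eq0 => /eqP ->.
by rewrite mulrN opprK.
Qed.

Definition tochain (K : fieldType) n (A : {set {set 'I_n}}) (u : 'rV[K]_#|A|)
  (F : {set 'I_n}) : K :=
  \sum_(i < #|A|) if enum_val i == F then u 0 i else 0.

Definition rowof (K : fieldType) n (A : {set {set 'I_n}}) (c : {set 'I_n} -> K)
  : 'rV[K]_#|A| := \row_(i < #|A|) c (enum_val i).
Arguments rowof {K n} A c.
Arguments tochain {K n A} u F.

Lemma tochainE (K : fieldType) n (A : {set {set 'I_n}}) (u : 'rV[K]_#|A|) i :
  tochain u (enum_val i) = u 0 i.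
Proof.
rewrite /tochain (bigD1 i) //= eqxx big1 ?addr0 // => k ki.
by case: eqP => // /enum_val_inj ki'; move: ki; rewrite ki' eqxx.
Qed.

Lemma tochain_supp (K : fieldType) n (A : {set {set 'I_n}}) (u : 'rV[K]_#|A|) :
  supp A (tochain u).
Proof.
move=> F FA; rewrite /tochain big1 // => i _; case: eqP => // h.
by move: FA; rewrite -h enum_valP.
Qed.

Lemma rowof_tochain (K : fieldType) n (A : {set {set 'I_n}}) (u : 'rV[K]_#|A|) :
  rowof A (tochain u) = u.
Proof. by apply/rowP => i; rewrite mxE tochainE. Qed.

Lemma dd_supp (K : fieldType) n (e : rel 'I_n) (S : {set 'I_n}) k (c : {set 'I_n} -> K) :
  supp (faces e S k) c -> forall F, F \notin faces e S k.-1 -> dd c F = 0.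
Proof.
move=> sc F Fn; rewrite /dd big1 // => v vF; rewrite sc ?mul0r //.
apply: contra Fn; rewrite !facesE cardsU1 vF add1n => /and3P [sF ind /eqP <-] /=.
rewrite eqxx andbT (indep_sub (subsetUr _ _) ind) andbT.
by apply: subset_trans sF; apply: subsetUr.
Qed.

Lemma bdry_id (K : fieldType) n (e : rel 'I_n) (S : {set 'I_n}) k (c : {set 'I_n} -> K) :
  supp (faces e S k) c -> forall i,
  (rowof (faces e S k) c *m bdry K e S k) 0 i = dd c (enum_val i).
Proof.
move=> sc i; rewrite mxE.
under eq_bigr => a _ do rewrite !mxE /=.
set F' := enum_val i.
have F'in : F' \in faces e S k.-1 by apply: enum_valP.
set g := fun F : {set 'I_n} => c F * (if F' \subset F then \sum_(v in F :\: F')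
      (-1) ^+ #|[set u in F | (u < v)%N]| else 0).
have -> : \sum_(a < #|faces e S k|) g (enum_val a) = \sum_(F in faces e S k) g F.
  exact: esym (big_enum_val (A := fun F => F \in faces e S k) g).
have -> : \sum_(F in faces e S k) g F = \sum_F g F.
  rewrite [RHS](bigID (fun F => F \in faces e S k)) /= [X in _ = _ + X]big1 ?addr0 //.
  by move=> F Fn; rewrite /g sc ?mul0r.
rewrite /g /dd.
have -> : \sum_(F : {set 'I_n}) c F * (if F' \subset F then \sum_(v in F :\: F')
      (-1) ^+ #|[set u in F | (u < v)%N]| else 0) =
   \sum_(F : {set 'I_n}) \sum_(v : 'I_n) (if (F' \subset F) && (v \in F :\: F') then c F * eps K F v else 0).
  apply: eq_bigr => F _; case: ifP => sF /=.
    by rewrite mulr_sumr big_mkcond /=.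
  by rewrite mulr0 big1.
rewrite exchange_big /= [RHS]big_mkcond /=; apply: eq_bigr => v _.
case: (boolP (v \in F')) => vF /=.
  by apply: big1 => F _; rewrite !inE vF andbF.
rewrite (bigD1 (v |: F')) //= subsetUr !inE eqxx vF /=.
rewrite big1 ?addr0 // => F nF; case: ifP => // /andP [sF].
rewrite !inE => /andP [vF' vinF].
rewrite sc ?mul0r //; apply/negP => Fin.
move: F'in Fin; rewrite !facesE => /and3P [_ _ /eqP cF'] /and3P [_ _ /eqP cF].
have h : v |: F' \subset F by rewrite subUset sub1set vinF sF.
have : v |: F' == F.
  by rewrite eqEcard h cardsU1 vF cF add1n cF'; case: (k) => //=.
by rewrite eq_sym (negbTE nF).
Qed.

Lemma bridge (K : fieldType) n (e : rel 'I_n) (S : {set 'I_n}) j :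
  (kermx (bdry K e S j) <= bdry K e S j.+1)%MS <-> HV K e S j.
Proof.
split.
  move=> Hk c sc dc0.
  set u := rowof (faces e S j) c.
  have uk : (u <= kermx (bdry K e S j))%MS.
    rewrite sub_kermx; apply/eqP/rowP => i; rewrite bdry_id // dc0 mxE //.
  have /submxP [D hD] := submx_trans uk Hk.
  exists (tochain D); split; first exact: tochain_supp.
  move=> F; case: (boolP (F \in faces e S j)) => Fin; last first.
    by rewrite (sc F Fin); exact: (dd_supp (e:=e) (S:=S) (k := j.+1) (tochain_supp D) Fin).
  rewrite -(enum_rankK_in Fin Fin).
  have := bdry_id (tochain_supp D) (enum_rank_in Fin F).
  rewrite rowof_tochain /= => <-; rewrite -hD /u mxE //.
move=> H; apply/row_subP => i.
set u := row i (kermx (bdry K e S j)).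
have u0 : (u *m bdry K e S j = 0)%R by apply/eqP; rewrite -sub_kermx row_sub.
have dc0 : forall F, dd (tochain u) F = 0.
  move=> F; case: (boolP (F \in faces e S j.-1)) => Fin; last first.
    exact: (dd_supp (e:=e) (S:=S) (k := j) (tochain_supp u) Fin).
  rewrite -(enum_rankK_in Fin Fin) -bdry_id; last exact: tochain_supp.
  by rewrite rowof_tochain u0 mxE.
have [b [sb db]] := H (tochain u) (tochain_supp u) dc0.
have -> : u = (rowof (faces e S j.+1) b *m bdry K e S j.+1)%R.
  apply/rowP => i'; rewrite (bdry_id sb i') db tochainE //.
exact: submxMl.
Qed.

Local Close Scope ring_scope.

Lemma regP (K : fieldType) n (e : rel 'I_n) (W : {set 'I_n}) m :
  reg_on K e W <= m <->
  (forall (S : {set 'I_n}) j, S \subset W -> m < j -> j < n.+2 -> HV K e S j).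
Proof.
rewrite /reg_on; split.
  move=> /bigmax_leqP h S j sW mj jn.
  case: (boolP (red_homology_nonzero K e S j)) => hr.
    have : (Ordinal jn) <= m.
      by apply: h; apply/existsP; exists S; rewrite sW hr.
    by rewrite /= leqNgt mj.
  by apply/bridge; move: hr; rewrite /red_homology_nonzero negbK.
move=> h; apply/bigmax_leqP => i /existsP [S /andP [sW hr]].
rewrite leqNgt; apply/negP => mi.
have /bridge := h S i sW mi (ltn_ord i).
by move: hr; rewrite /red_homology_nonzero => /negP.
Qed.

Lemma reg_HV (K : fieldType) n (e : rel 'I_n) (W S : {set 'I_n}) j :
  S \subset W -> reg_on K e W < j -> j < n.+2 -> HV K e S j.
Proof. by move=> sW rj jn; apply: (proj1 (regP K e W _) (leqnn _)). Qed.

Lemma reg_split (K : fieldType) n (e : rel 'I_n) (e_sym : symmetric e) (e_irr : irreflexive e)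
  (W : {set 'I_n}) a :
  reg_on K e W <= maxn (reg_on K e (W :\ a)) (reg_on K e (W :\: (a |: NB e a))).+1.
Proof.
apply/regP => S j sW mj jn; case: (boolP (a \in S)) => aS.
  case: j mj jn => [|j] mj jn; first by rewrite ltn0 in mj.
  move: mj; rewrite gtn_max => /andP [m1 m2].
  apply: (core e_sym e_irr aS).
    by apply: (reg_HV (W := W :\ a)) => //; apply: setSD.
  by apply: (reg_HV (W := W :\: (a |: NB e a))) => //; [apply: setSD | apply: ltnW].
apply: (reg_HV (W := W :\ a)) => //; last by move: mj; rewrite gtn_max => /andP [].
by rewrite subsetD1 sW aS.
Qed.

Lemma reg_cone (K : fieldType) n (e : rel 'I_n) (e_sym : symmetric e) (e_irr : irreflexive e)
  (W : {set 'I_n}) a :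
  (forall x, x \in W -> ~~ e a x) -> reg_on K e W <= reg_on K e (W :\ a).
Proof.
move=> ha; apply/regP => S j sW mj jn; case: (boolP (a \in S)) => aS.
  by apply: (cone e_sym e_irr aS) => x xS; apply: ha; apply: (subsetP sW).
by apply: (reg_HV (W := W :\ a)) => //; rewrite subsetD1 sW aS.
Qed.

Lemma HV_empty (K : fieldType) n (e : rel 'I_n) (S : {set 'I_n}) j :
  (forall F, F \notin faces e S j) -> HV K e S j.
Proof.
move=> h c sc _; exists (fun _ => 0%R); split => // F.
by rewrite /dd big1 ?sc // => v _; rewrite mul0r.
Qed.

Lemma reg_indep (K : fieldType) n (e : rel 'I_n) (e_sym : symmetric e) (e_irr : irreflexive e)
  (W : {set 'I_n}) :
  (forall u v, u \in W -> v \in W -> ~~ e u v) -> reg_on K e W = 0%N.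
Proof.
move=> h; apply/eqP; rewrite -leqn0; apply/regP => S j sW j0 jn.
case: (set_0Vmem S) => [-> | [a aS]].
  apply: HV_empty => F; rewrite facesE subset0; apply/negP => /and3P [/eqP -> _].
  by rewrite cards0 => /eqP j0'; rewrite -j0' in j0.
apply: (cone e_sym e_irr aS) => x xS; apply: h; exact: (subsetP sW).
Qed.

Lemma reg_mono (K : fieldType) n (e : rel 'I_n) (W W' : {set 'I_n}) :
  W \subset W' -> reg_on K e W <= reg_on K e W'.
Proof.
move=> sWW'; apply/regP => S j sW mj jn.
by apply: (reg_HV (W := W')) => //; apply: subset_trans sWW'.
Qed.

Lemma indep_of_empty n (e : rel 'I_n) (T W : {set 'I_n}) :
  T :&: W = set0 ->
  (forall u v, u \in W -> v \in W -> u \notin T -> v \notin T -> ~~ e u v) ->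
  forall u v, u \in W -> v \in W -> ~~ e u v.
Proof.
move=> h0 hD u v uW vW; apply: hD => //; apply/negP => hT.
  have : u \in T :&: W by rewrite inE hT uW.
  by rewrite h0 inE.
have : v \in T :&: W by rewrite inE hT vW.
by rewrite h0 inE.
Qed.

Lemma card_ID1 n (T W : {set 'I_n}) t : t \in T :&: W ->
  #|T :&: (W :\ t)|.+1 = #|T :&: W|.
Proof.
move=> tin; rewrite (cardsD1 t (T :&: W)) tin add1n; congr (_.+1); apply: eq_card => x.
by rewrite !inE; case: (x == t); rewrite ?andbF.
Qed.

Lemma chain_step n (e : rel 'I_n) (e_sym : symmetric e) (hfree : twoK2_free e)
  (T W : {set 'I_n}) t u v :
  (forall u v, u \in T :&: W -> v \in T :&: W -> ~~ e u v) ->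
  (forall u v, u \in W -> v \in W -> u \notin T -> v \notin T -> ~~ e u v) ->
  t \in T :&: W -> (#|NB e u :&: W| <= #|NB e t :&: W|)%N ->
  u \in T -> v \notin T -> u \in W -> v \in W -> ~~ e t u -> ~~ e t v -> ~~ e u v.
Proof.
move=> hT hD tin tmax uT vT uW vW ntu ntv; apply/negP => euv.
case: (boolP (NB e t :&: W \subset NB e u)) => hs.
  have : (#|v |: (NB e t :&: W)| <= #|NB e u :&: W|)%N.
    apply: subset_leq_card; rewrite subUset sub1set !inE euv vW /=.
    by rewrite subsetI hs subsetIr.
  by rewrite cardsU1 !inE (negbTE ntv) /= add1n ltnNge tmax.
move/subsetPn: hs => [d]; rewrite !inE => /andP [etd dW] ndu.
have dT : d \notin T.
  apply/negP => dT; have := hT t d tin; rewrite !inE dT dW etd => /(_ isT).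
  by [].
have := hfree t d u v etd euv.
rewrite (negbTE ntu) (negbTE ntv) e_sym (negbTE ndu) /=.
by rewrite (negbTE (hD d v dW vW dT vT)).
Qed.

Lemma reg_chain (K : fieldType) n (e : rel 'I_n) (e_sym : symmetric e) (e_irr : irreflexive e)
  (hfree : twoK2_free e) :
  forall k (T W : {set 'I_n}), (#|T :&: W| <= k)%N ->
  (forall u v, u \in T :&: W -> v \in T :&: W -> ~~ e u v) ->
  (forall u v, u \in W -> v \in W -> u \notin T -> v \notin T -> ~~ e u v) ->
  (reg_on K e W <= 1)%N.
Proof.
elim => [|k IH] T W hk hT hD.
  move: hk; rewrite leqn0 cards_eq0 => /eqP h0.
  by rewrite (reg_indep K e_sym e_irr (indep_of_empty h0 hD)).
case: (set_0Vmem (T :&: W)) => [h0 | [t0 t0in]].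
  by rewrite (reg_indep K e_sym e_irr (indep_of_empty h0 hD)).
case: (arg_maxnP (fun t => #|NB e t :&: W|) t0in) => t tin tmax.
apply: leq_trans (reg_split K e_sym e_irr W t) _; rewrite geq_max; apply/andP; split.
  apply: (IH T).
  - by rewrite -ltnS card_ID1.
  - by move=> u v; rewrite !inE => /andP [uT /andP [_ uW]] /andP [vT /andP [_ vW]]; apply: hT; rewrite inE ?uT ?vT ?uW ?vW.
  - by move=> u v; rewrite !inE => /andP [_ uW] /andP [_ vW]; apply: hD.
rewrite ltnS leqn0; apply/eqP; apply: (reg_indep K e_sym e_irr) => u v.
rewrite !inE !negb_or => /andP [/andP [ut ntu] uW] /andP [/andP [vt ntv] vW].
case: (boolP (u \in T)) => uT; case: (boolP (v \in T)) => vT.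
- by apply: hT; rewrite inE ?uT ?vT ?uW ?vW.
- have uin : u \in T :&: W by rewrite inE uT uW.
  exact: (chain_step e_sym hfree hT hD tin (tmax u uin)).
- have vin : v \in T :&: W by rewrite inE vT vW.
  rewrite e_sym; exact: (chain_step e_sym hfree hT hD tin (tmax v vin)).
- exact: hD.
Qed.

Lemma reg_cover (K : fieldType) n (e : rel 'I_n) (e_sym : symmetric e) (e_irr : irreflexive e)
  (hfree : twoK2_free e) :
  forall k (T W : {set 'I_n}), (#|T :&: W| <= k)%N ->
  (forall u v, u \in W -> v \in W -> u \notin T -> v \notin T -> ~~ e u v) ->
  (2 * reg_on K e W <= #|T :&: W| + 1)%N.
Proof.
elim => [|k IH] T W hk hD.
  move: hk; rewrite leqn0 cards_eq0 => /eqP h0.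
  by rewrite (reg_indep K e_sym e_irr (indep_of_empty h0 hD)).
case: (boolP [exists t, exists t', [&& t \in T :&: W, t' \in T :&: W & e t t']]).
  move=> /existsP [t /existsP [t' /and3P [tin t'in ett']]].
  have hD1 : forall u v, u \in W :\ t -> v \in W :\ t -> u \notin T -> v \notin T -> ~~ e u v.
    by move=> u v; rewrite !inE => /andP [_ uW] /andP [_ vW]; apply: hD.
  set W2 := W :\: (t |: NB e t).
  have hD2 : forall u v, u \in W2 -> v \in W2 -> u \notin T -> v \notin T -> ~~ e u v.
    by move=> u v; rewrite !inE => /andP [_ uW] /andP [_ vW]; apply: hD.
  have c1 := card_ID1 tin.
  have c2 : (#|T :&: W2| + 2 <= #|T :&: W|)%N.
    have : (#|t' |: (t |: (T :&: W2))| <= #|T :&: W|)%N.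
      apply: subset_leq_card; rewrite !subUset !sub1set tin t'in /=.
      by apply: setIS; apply: subsetDl.
    rewrite cardsU1 cardsU1 !inE ett' eqxx /= !andbF /=.
    have -> : (t' == t) = false by apply/negP => /eqP h; move: ett'; rewrite h e_irr.
    rewrite /=. lia.
  have h1 := IH T (W :\ t) ltac:(lia) hD1.
  have h2 := IH T W2 ltac:(lia) hD2.
  have := reg_split K e_sym e_irr W t; rewrite -/W2 => h.
  move: h; rewrite leq_max => /orP [h | h]; lia.
rewrite negb_exists => /forallP hno.
have hT : forall u v, u \in T :&: W -> v \in T :&: W -> ~~ e u v.
  move=> u v uin vin; have := hno u; rewrite negb_exists => /forallP /(_ v).
  by rewrite uin vin.
have h1 := reg_chain K e_sym e_irr hfree (leqnn _) hT hD.
case: (set_0Vmem (T :&: W)) => [h0 | [t0 t0in]].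
  by rewrite (reg_indep K e_sym e_irr (indep_of_empty h0 hD)).
have : (0 < #|T :&: W|)%N by apply/card_gt0P; exists t0.
lia.
Qed.

Theorem mainTheorem20 (K : fieldType) (n : nat) (e : rel 'I_n)
  (e_sym : symmetric e) (e_irr : irreflexive e)
  (hfree : twoK2_free e) (hprime : prime_graph K e) :
  (2 * reg K e <= min_degree e + 3)%N.
Proof.
case: hprime => _ hlt.
have key : forall x, (2 * reg K e <= degree e x + 2)%N.
  move=> x; case: (set_0Vmem (NB e x)) => [h0 | [y yN]].
    have := reg_cone K e_sym e_irr (W := [set: 'I_n]) (a := x).
    have hx : forall z, z \in [set: 'I_n] -> ~~ e x z.
      move=> z _; apply/negP => exz; have : z \in NB e x by rewrite inE.
      by rewrite h0 inE.
    move=> /(_ hx); rewrite setTD => h.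
    by have := hlt x; rewrite /reg ltnNge h.
  set Q := [set: 'I_n] :\: (y |: NB e y).
  have h1 := reg_split K e_sym e_irr [set: 'I_n] y.
  rewrite -/Q setTD in h1.
  have h2 := hlt y.
  have hD : forall u v, u \in Q -> v \in Q -> u \notin NB e x -> v \notin NB e x -> ~~ e u v.
    move=> u v; rewrite !inE !negb_or => /andP [/andP [_ nyu] _] /andP [/andP [_ nyv] _] nxu nxv.
    apply/negP => euv; have := hfree x y u v; rewrite inE in yN; move=> /(_ yN euv).
    by rewrite (negbTE nxu) (negbTE nxv) (negbTE nyu) (negbTE nyv).
  have h3 := reg_cover K e_sym e_irr hfree (leqnn _) hD.
  have h4 : (#|NB e x :&: Q| + 1 <= degree e x)%N.
    have : (#|y |: (NB e x :&: Q)| <= #|NB e x|)%N.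
      by apply: subset_leq_card; rewrite subUset sub1set yN subsetIl.
    by rewrite cardsU1 !inE eqxx /= andbF addnC.
  rewrite /reg; move: h1 h2; rewrite /reg leq_max => /orP [h | h] h2; first by move: h2; rewrite ltnNge h.
  lia.
rewrite /min_degree.
apply: (big_ind (fun m => 2 * reg K e <= m + 3)%N).
- case: n e e_sym e_irr hfree hlt key => [|n'] e' e_sym' e_irr' hfree' hlt' key'.
    rewrite /reg (reg_indep K e_sym' e_irr') //; by case.
  have := key' ord0; have : (degree e' ord0 <= n'.+1)%N.
    by rewrite /degree; apply: leq_trans (max_card _) _; rewrite card_ord.
  lia.
- move=> a b ha hb; rewrite /minn; case: ifP => _ //.
- move=> v _; have := key v; lia.
Qed.
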